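(* Let $\tau>0$, $\zeta\in\mathbb{C}$, $\sigma\in\{1,-1\}$, $q\in\mathbb{C}$, and set $$A=\begin{pmatrix}-i\zeta&0\\0&i\zeta\end{pmatrix},\qquad B=\begin{pmatrix}0&q\\-\sigma\overline{q}&0\end{pmatrix}.$$ Consider the 11-factor product $$P=e^{\frac{7}{48}\tau B}e^{\frac{1}{3}\tau A}e^{\frac{3}{8}\tau B}e^{-\frac{1}{3}\tau A}e^{-\frac{1}{48}\tau B}e^{\tau A}e^{-\frac{1}{48}\tau B}e^{-\frac{1}{3}\tau A}e^{\frac{3}{8}\tau B}e^{\frac{1}{3}\tau A}e^{\frac{7}{48}\tau B}.$$ Let $Z=e^{-i\tau\zeta/3}$ and $W=Z^2$. Then $P=Z^{-7}\,\hat S(W)$, where $\hat S(W)$ is a $2\times 2$ matrix whose entries are polynomials in $W$ of degree at most $7$ with coefficients independent of $\zeta$ (depending only on $\tau,q,\sigma$). Equivalently, $P=Z^{-7}S(Z)$ with $S$ a matrix polynomial in $Z$ of degree at most $14$ containing only even powers of $Z$.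
   Context: $\overline{q}$ denotes the complex conjugate of $q$; $e^{M}$ denotes the matrix exponential. *)

(* Defs.v *)
From Stdlib Require Import Reals Arith Factorial ClassicalEpsilon.
Open Scope R_scope.

Record Cplx := mkC { Cre : R ; Cim : R }.

Definition RtoC (r : R) : Cplx := mkC r 0.
Definition C0 : Cplx := RtoC 0.
Definition C1 : Cplx := RtoC 1.
Definition Ci : Cplx := mkC 0 1.
Definition Cadd (z w : Cplx) : Cplx := mkC (Cre z + Cre w) (Cim z + Cim w).
Definition Copp (z : Cplx) : Cplx := mkC (- Cre z) (- Cim z).
Definition Cmul (z w : Cplx) : Cplx :=
  mkC (Cre z * Cre w - Cim z * Cim w) (Cre z * Cim w + Cim z * Cre w).
Definition Cconj (z : Cplx) : Cplx := mkC (Cre z) (- Cim z).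
Definition Cinv (z : Cplx) : Cplx :=
  let d := Cre z * Cre z + Cim z * Cim z in mkC (Cre z / d) (- Cim z / d).
Fixpoint Cpow (z : Cplx) (n : nat) : Cplx :=
  match n with O => C1 | S k => Cmul z (Cpow z k) end.
Definition Cexp (z : Cplx) : Cplx :=
  mkC (exp (Cre z) * cos (Cim z)) (exp (Cre z) * sin (Cim z)).

Record M2 := mkM2 { m11 : Cplx ; m12 : Cplx ; m21 : Cplx ; m22 : Cplx }.

Definition M0 : M2 := mkM2 C0 C0 C0 C0.
Definition M1 : M2 := mkM2 C1 C0 C0 C1.
Definition Madd (A B : M2) : M2 :=
  mkM2 (Cadd (m11 A) (m11 B)) (Cadd (m12 A) (m12 B))
       (Cadd (m21 A) (m21 B)) (Cadd (m22 A) (m22 B)).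
Definition Mmul (A B : M2) : M2 :=
  mkM2 (Cadd (Cmul (m11 A) (m11 B)) (Cmul (m12 A) (m21 B)))
       (Cadd (Cmul (m11 A) (m12 B)) (Cmul (m12 A) (m22 B)))
       (Cadd (Cmul (m21 A) (m11 B)) (Cmul (m22 A) (m21 B)))
       (Cadd (Cmul (m21 A) (m12 B)) (Cmul (m22 A) (m22 B))).
Definition Mscale (c : Cplx) (A : M2) : M2 :=
  mkM2 (Cmul c (m11 A)) (Cmul c (m12 A)) (Cmul c (m21 A)) (Cmul c (m22 A)).
Fixpoint Mpow (A : M2) (n : nat) : M2 :=
  match n with O => M1 | S k => Mmul A (Mpow A k) end.

Fixpoint expsum (A : M2) (N : nat) : M2 :=
  match N with
  | O => M1
  | S n => Madd (expsum A n) (Mscale (RtoC (/ INR (fact (S n)))) (Mpow A (S n)))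
  end.

Definition Ccv (u : nat -> Cplx) (l : Cplx) : Prop :=
  Un_cv (fun n => Cre (u n)) (Cre l) /\ Un_cv (fun n => Cim (u n)) (Cim l).

Definition Mcv (u : nat -> M2) (L : M2) : Prop :=
  Ccv (fun n => m11 (u n)) (m11 L) /\ Ccv (fun n => m12 (u n)) (m12 L) /\
  Ccv (fun n => m21 (u n)) (m21 L) /\ Ccv (fun n => m22 (u n)) (m22 L).

(* matrix exponential e^A := lim_N sum_{k=0}^N A^k/k! (the series always
   converges; epsilon picks its (unique) limit) *)
Definition mexp (A : M2) : M2 :=
  epsilon (inhabits M0) (fun E => Mcv (fun N => expsum A N) E).

Fixpoint Mpoly (s : nat -> M2) (n : nat) (w : Cplx) : M2 :=
  match n with
  | O => Mscale (Cpow w 0) (s 0%nat)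
  | S k => Madd (Mpoly s k w) (Mscale (Cpow w (S k)) (s (S k)))
  end.

Definition matA (zeta : Cplx) : M2 :=
  mkM2 (Copp (Cmul Ci zeta)) C0 C0 (Cmul Ci zeta).
Definition matB (sigma : R) (q : Cplx) : M2 :=
  mkM2 C0 q (Cmul (RtoC (- sigma)) (Cconj q)) C0.

Definition E (c tau : R) (M : M2) : M2 := mexp (Mscale (RtoC (c * tau)) M).

Definition prodP (tau sigma : R) (q zeta : Cplx) : M2 :=
  let A := matA zeta in let B := matB sigma q in
  Mmul (E (7/48) tau B) (Mmul (E (1/3) tau A) (Mmul (E (3/8) tau B)
  (Mmul (E (-(1/3)) tau A) (Mmul (E (-(1/48)) tau B) (Mmul (E 1 tau A)
  (Mmul (E (-(1/48)) tau B) (Mmul (E (-(1/3)) tau A) (Mmul (E (3/8) tau B)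
  (Mmul (E (1/3) tau A) (E (7/48) tau B)))))))))).

(* Main.v *)
Require Import Defs.
From Stdlib Require Import Reals.
Open Scope R_scope.
From Stdlib Require Import Lra Lia ClassicalEpsilon.
From Coquelicot Require Import Rcomplements Rbar Hierarchy Lim_seq Series PSeries Derive AutoDerive ElemFct.
Open Scope R_scope.
Notation C1 := Defs.C1.
Notation C0 := Defs.C0.
Definition Csub (x y : Cplx) := Cadd x (Copp y).

Lemma Cplx_eq (x y : Cplx) : Cre x = Cre y -> Cim x = Cim y -> x = y.
Proof. destruct x, y; simpl; intros; subst; reflexivity. Qed.

Lemma Cring : ring_theory C0 C1 Cadd Cmul Csub Copp (@eq Cplx).
Proof.
  constructor; intros; apply Cplx_eq; unfold Csub, Cadd, Cmul, Copp, Defs.C0, Defs.C1, RtoC; simpl; ring.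
Qed.
Add Ring CplxRing : Cring.

Lemma M2_eq (X Y : M2) : m11 X = m11 Y -> m12 X = m12 Y -> m21 X = m21 Y -> m22 X = m22 Y -> X = Y.
Proof. destruct X, Y; simpl; intros; subst; reflexivity. Qed.

Ltac meq := repeat match goal with M : M2 |- _ => destruct M end;
  apply M2_eq; cbn [m11 m12 m21 m22 Madd Mmul Mscale Mpoly M1 M0 Cpow]; ring.

Lemma Mmul_addr (C X Y : M2) : Mmul C (Madd X Y) = Madd (Mmul C X) (Mmul C Y).
Proof. meq. Qed.
Lemma Mmul_scaler (C X : M2) c : Mmul C (Mscale c X) = Mscale c (Mmul C X).
Proof. meq. Qed.
Lemma Mmul_scalel (C X : M2) c : Mmul (Mscale c C) X = Mscale c (Mmul C X).
Proof. meq. Qed.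
Lemma Mscale_scale (X : M2) c d : Mscale c (Mscale d X) = Mscale (Cmul c d) X.
Proof. meq. Qed.
Lemma Mscale_add (X Y : M2) c : Mscale c (Madd X Y) = Madd (Mscale c X) (Mscale c Y).
Proof. meq. Qed.
Lemma Mmul_assoc (X Y Z : M2) : Mmul X (Mmul Y Z) = Mmul (Mmul X Y) Z.
Proof. meq. Qed.

Lemma Mpoly_ext_fun s t n W : (forall k, (k <= n)%nat -> s k = t k) -> Mpoly s n W = Mpoly t n W.
Proof.
  induction n; intros H; simpl.
  - rewrite H; auto.
  - rewrite IHn by (intros; apply H; auto). rewrite H; auto.
Qed.

Definition PolyF (f : Cplx -> M2) (n : nat) := exists s, forall W, f W = Mpoly s n W.

Lemma PolyF_ext f g n : (forall W, f W = g W) -> PolyF f n -> PolyF g n.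
Proof. intros H [s Hs]; exists s; intros; rewrite <- H; auto. Qed.

Lemma PolyF_const C : PolyF (fun _ => C) 0.
Proof. exists (fun _ => C); intros; simpl. meq. Qed.

Lemma PolyF_mull C f n : PolyF f n -> PolyF (fun W => Mmul C (f W)) n.
Proof.
  intros [s Hs]; exists (fun k => Mmul C (s k)); intros W; rewrite Hs; clear Hs.
  induction n; simpl.
  - apply Mmul_scaler.
  - rewrite Mmul_addr, Mmul_scaler, IHn; auto.
Qed.

Lemma PolyF_shift f n : PolyF f n -> PolyF (fun W => Mscale W (f W)) (S n).
Proof.
  intros [s Hs]; exists (fun k => match k with O => M0 | S k' => s k' end); intros W; rewrite Hs; clear Hs.
  induction n; simpl.
  - meq.
  - rewrite Mscale_add, IHn. simpl. f_equal. rewrite Mscale_scale. reflexivity.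
Qed.

Lemma PolyF_up f n : PolyF f n -> PolyF f (S n).
Proof.
  intros [s Hs]; exists (fun k => if Nat.leb k n then s k else M0); intros W; rewrite Hs; clear Hs.
  cbn [Mpoly]. replace (Nat.leb (S n) n) with false by (symmetry; apply Nat.leb_gt; lia).
  rewrite (Mpoly_ext_fun s (fun k => if Nat.leb k n then s k else M0) n W).
  - meq.
  - intros k Hk. apply Nat.leb_le in Hk. rewrite Hk. reflexivity.
Qed.

Lemma PolyF_add f g n : PolyF f n -> PolyF g n -> PolyF (fun W => Madd (f W) (g W)) n.
Proof.
  intros [s Hs] [t Ht]; exists (fun k => Madd (s k) (t k)); intros W; rewrite Hs, Ht; clear Hs Ht.
  induction n; simpl.
  - meq.
  - rewrite <- IHn. meq.
Qed.

Definition E11 : M2 := mkM2 C1 C0 C0 C0.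
Definition E22 : M2 := mkM2 C0 C0 C0 C1.

Lemma PolyF_diag1 f n : PolyF f n -> PolyF (fun W => Mmul (mkM2 W C0 C0 C1) (f W)) (S n).
Proof.
  intros H.
  apply (PolyF_ext (fun W => Madd (Mscale W (Mmul E11 (f W))) (Mmul E22 (f W)))).
  { intros W. unfold E11, E22. meq. }
  apply PolyF_add. apply PolyF_shift, PolyF_mull, H. apply PolyF_up, PolyF_mull, H.
Qed.

Lemma PolyF_diag2 f n : PolyF f n -> PolyF (fun W => Mmul (mkM2 C1 C0 C0 W) (f W)) (S n).
Proof.
  intros H.
  apply (PolyF_ext (fun W => Madd (Mscale W (Mmul E22 (f W))) (Mmul E11 (f W)))).
  { intros W. unfold E11, E22. meq. }
  apply PolyF_add. apply PolyF_shift, PolyF_mull, H. apply PolyF_up, PolyF_mull, H.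
Qed.

Lemma PolyF_diag3 f n : PolyF f n -> PolyF (fun W => Mmul (mkM2 (Cmul W (Cmul W W)) C0 C0 C1) (f W)) (S (S (S n))).
Proof.
  intros H.
  apply (PolyF_ext (fun W => Madd (Mscale W (Mscale W (Mscale W (Mmul E11 (f W))))) (Mmul E22 (f W)))).
  { intros W. unfold E11, E22. meq. }
  apply PolyF_add. apply PolyF_shift, PolyF_shift, PolyF_shift, PolyF_mull, H.
  apply PolyF_up, PolyF_up, PolyF_up, PolyF_mull, H.
Qed.

Definition Qf (B1 B2 B3 : M2) (W : Cplx) : M2 :=
  Mmul B1 (Mmul (mkM2 W C0 C0 C1) (Mmul B2 (Mmul (mkM2 C1 C0 C0 W) (Mmul B3
  (Mmul (mkM2 (Cmul W (Cmul W W)) C0 C0 C1) (Mmul B3 (Mmul (mkM2 C1 C0 C0 W)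
  (Mmul B2 (Mmul (mkM2 W C0 C0 C1) B1))))))))).

Lemma PolyF_Q B1 B2 B3 : PolyF (Qf B1 B2 B3) 7.
Proof.
  unfold Qf.
  apply PolyF_mull, PolyF_diag1, PolyF_mull, PolyF_diag2, PolyF_mull, PolyF_diag3,
    PolyF_mull, PolyF_diag2, PolyF_mull, PolyF_diag1, PolyF_const.
Qed.

Lemma Cinv_eq z y : Cmul z y = C1 -> Cinv z = y.
Proof.
  destruct z as [a b], y as [c d]. intros H.
  injection H as H1 H2. cbn in *. unfold Cinv. cbn.
  assert (Hd : a * a + b * b <> 0).
  { intros Hd. assert (a = 0) by nra. assert (b = 0) by nra. subst. lra. }
  f_equal.
  - apply (Rmult_eq_reg_r (a * a + b * b)); auto. field_simplify; auto.
    transitivity (a * (a * c - b * d) + b * (a * d + b * c)); [rewrite H1, H2; ring | ring].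
  - apply (Rmult_eq_reg_r (a * a + b * b)); auto. field_simplify; auto.
    transitivity (a * (a * d + b * c) - b * (a * c - b * d)); [rewrite H1, H2; ring | ring].
Qed.

Lemma diag_scale c p q x y : Cmul c x = p -> Cmul c y = q -> mkM2 p C0 C0 q = Mscale c (mkM2 x C0 C0 y).
Proof. intros H1 H2. apply M2_eq; cbn [m11 m12 m21 m22 Mscale]; [rewrite H1| |  |rewrite H2]; ring. Qed.

Lemma Cpow2 Z : Cpow Z 2 = Cmul Z (Cmul Z C1). Proof. reflexivity. Qed.
Lemma Cpow7 Z : Cpow Z 7 = Cmul Z (Cmul Z (Cmul Z (Cmul Z (Cmul Z (Cmul Z (Cmul Z C1)))))). Proof. reflexivity. Qed.

Lemma assemble B1 B2 B3 Z Zi : Cmul Z Zi = C1 ->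
  Mmul B1 (Mmul (mkM2 Z C0 C0 Zi) (Mmul B2 (Mmul (mkM2 Zi C0 C0 Z) (Mmul B3
  (Mmul (mkM2 (Cmul Z (Cmul Z Z)) C0 C0 (Cmul Zi (Cmul Zi Zi))) (Mmul B3 (Mmul (mkM2 Zi C0 C0 Z)
  (Mmul B2 (Mmul (mkM2 Z C0 C0 Zi) B1)))))))))
  = Mscale (Cinv (Cpow Z 7)) (Qf B1 B2 B3 (Cpow Z 2)).
Proof.
  intros H.
  assert (K : forall X, Cmul Zi (Cmul Z X) = X).
  { intros X. transitivity (Cmul (Cmul Z Zi) X); [ring|]. rewrite H; ring. }
  rewrite (diag_scale Zi Z Zi (Cpow Z 2) C1) by (rewrite ?Cpow2, ?K; ring).
  rewrite (diag_scale Zi Zi Z C1 (Cpow Z 2)) by (rewrite ?Cpow2, ?K; ring).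
  rewrite (diag_scale (Cmul Zi (Cmul Zi Zi)) (Cmul Z (Cmul Z Z)) (Cmul Zi (Cmul Zi Zi)) (Cmul (Cpow Z 2) (Cmul (Cpow Z 2) (Cpow Z 2))) C1).
  2:{ rewrite Cpow2. transitivity (Cmul Zi (Cmul Z (Cmul Zi (Cmul Z (Cmul Zi (Cmul Z (Cmul Z (Cmul Z Z)))))))); [ring|].
      rewrite !K; reflexivity. }
  2:{ ring. }
  rewrite (Cinv_eq (Cpow Z 7) (Cpow Zi 7)).
  2:{ rewrite !Cpow7. transitivity (Cmul Zi (Cmul Z (Cmul Zi (Cmul Z (Cmul Zi (Cmul Z (Cmul Zi (Cmul Z (Cmul Zi (Cmul Z (Cmul Zi (Cmul Z (Cmul Zi (Cmul Z C1)))))))))))))); [ring|].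
      rewrite !K; reflexivity. }
  unfold Qf. repeat (rewrite ?Mmul_scalel, ?Mmul_scaler). rewrite !Mscale_scale.
  f_equal. rewrite Cpow7. ring.
Qed.
Lemma ode_unique (f g : R -> R) a b :
  (forall t, is_derive f t (a * f t - b * g t)) ->
  (forall t, is_derive g t (a * g t + b * f t)) ->
  f 0 = 1 -> g 0 = 0 -> f 1 = exp a * cos b /\ g 1 = exp a * sin b.
Proof.
  intros Hf Hg H0 H1.
  set (F := fun t => exp (-2*a*t) * ((f t - exp (a*t) * cos (b*t))^2 + (g t - exp (a*t) * sin (b*t))^2)).
  assert (HF : forall t, is_derive F t 0).
  { intros t. unfold F. auto_derive.
    - split. exists (a * f t - b * g t); auto. split; auto.
      exists (a * g t + b * f t); auto.
    - replace (Derive (fun x => f x) t) with (a * f t - b * g t) by (symmetry; apply is_derive_unique; apply Hf).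
      replace (Derive (fun x => g x) t) with (a * g t + b * f t) by (symmetry; apply is_derive_unique; apply Hg).
      ring. }
  destruct (MVT_cor2 F (fun _ => 0) 0 1) as [c [Hc _]]; [lra| |].
  { intros c _. apply is_derive_Reals, HF. }
  assert (F 1 = 0).
  { replace (F 0) with 0 in Hc. lra. unfold F. rewrite H0, H1. replace (a*0) with 0 by ring. replace (b*0) with 0 by ring.
    rewrite exp_0, cos_0, sin_0. ring. }
  unfold F in H. replace (a*1) with a in H by ring. replace (b*1) with b in H by ring.
  assert (exp (-2*a*1) > 0) by apply exp_pos.
  assert (Hs : (f 1 - exp a * cos b) ^ 2 + (g 1 - exp a * sin b) ^ 2 = 0).
  { apply (Rmult_eq_reg_l (exp (-2*a*1))); [rewrite Rmult_0_r; exact H | lra]. }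
  set (u := f 1 - exp a * cos b) in *. set (v := g 1 - exp a * sin b) in *.
  assert (u = 0) by nra. assert (v = 0) by nra. unfold u, v in *. split; lra.
Qed.

Lemma term_le_exp y n : 0 <= y -> y ^ n / INR (Factorial.fact n) <= exp y.
Proof.
  intros Hy. eapply Rle_trans; [| apply (exp_ge_taylor y n Hy)].
  destruct n; [simpl; lra|]. rewrite tech5.
  assert (0 <= sum_f_R0 (fun k => y ^ k / INR (Factorial.fact k)) n).
  { apply cond_pos_sum. intros k. apply Rmult_le_pos. apply pow_le; auto.
    left; apply Rinv_0_lt_compat, INR_fact_lt_0. }
  lra.
Qed.

Lemma radius_inf (c : nat -> R) K M : 0 <= K -> 0 <= M ->
  (forall n, Rabs (c n) <= K * (M ^ n / INR (Factorial.fact n))) -> forall x, Rbar_lt (Rabs x) (CV_radius c).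
Proof.
  intros HK HM Hc x.
  destruct (CV_radius_bounded c) as [Hub _].
  assert (Hr : 0 <= Rabs x + 1) by (pose proof (Rabs_pos x); lra).
  specialize (Hub (Rabs x + 1)).
  eapply Rbar_lt_le_trans; [| apply Hub].
  - simpl. lra.
  - exists (K * exp (M * (Rabs x + 1))). intros n.
    rewrite Rabs_mult, (Rabs_pos_eq ((Rabs x + 1) ^ n)) by (apply pow_le; auto).
    eapply Rle_trans.
    + apply Rmult_le_compat_r; [apply pow_le; auto| apply Hc].
    + rewrite Rmult_assoc. apply Rmult_le_compat_l; auto.
      replace (M ^ n / INR (Factorial.fact n) * (Rabs x + 1) ^ n) with ((M * (Rabs x + 1)) ^ n / INR (Factorial.fact n))
        by (rewrite Rpow_mult_distr; unfold Rdiv; ring).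
      apply term_le_exp. apply Rmult_le_pos; auto.
Qed.

Definition cR a b n := Cre (Cpow (mkC a b) n) / INR (Factorial.fact n).
Definition cI a b n := Cim (Cpow (mkC a b) n) / INR (Factorial.fact n).

Lemma pow_bound a b n : Rabs (Cre (Cpow (mkC a b) n)) + Rabs (Cim (Cpow (mkC a b) n)) <= (Rabs a + Rabs b) ^ n.
Proof.
  induction n; simpl.
  - rewrite Rabs_R1, Rabs_R0; lra.
  - set (x := Cre (Cpow (mkC a b) n)) in *. set (y := Cim (Cpow (mkC a b) n)) in *.
    pose proof (Rabs_triang (a*x) (- (b*y))). pose proof (Rabs_triang (a*y) (b*x)).
    unfold Rminus. rewrite Rabs_Ropp, !Rabs_mult in *.
    pose proof (Rabs_pos a); pose proof (Rabs_pos b); pose proof (Rabs_pos x); pose proof (Rabs_pos y).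
    nra.
Qed.

Lemma cR_bound a b n : Rabs (cR a b n) <= 1 * ((Rabs a + Rabs b) ^ n / INR (Factorial.fact n)).
Proof.
  unfold cR, Rdiv. rewrite Rabs_mult, Rabs_inv, (Rabs_pos_eq (INR (Factorial.fact n))) by (left; apply INR_fact_lt_0).
  rewrite Rmult_1_l. apply Rmult_le_compat_r. left; apply Rinv_0_lt_compat, INR_fact_lt_0.
  pose proof (pow_bound a b n). pose proof (Rabs_pos (Cim (Cpow (mkC a b) n))). lra.
Qed.

Lemma cI_bound a b n : Rabs (cI a b n) <= 1 * ((Rabs a + Rabs b) ^ n / INR (Factorial.fact n)).
Proof.
  unfold cI, Rdiv. rewrite Rabs_mult, Rabs_inv, (Rabs_pos_eq (INR (Factorial.fact n))) by (left; apply INR_fact_lt_0).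
  rewrite Rmult_1_l. apply Rmult_le_compat_r. left; apply Rinv_0_lt_compat, INR_fact_lt_0.
  pose proof (pow_bound a b n). pose proof (Rabs_pos (Cre (Cpow (mkC a b) n))). lra.
Qed.

Lemma fact_S n : INR (Factorial.fact (S n)) = INR (S n) * INR (Factorial.fact n).
Proof. change (Factorial.fact (S n)) with (S n * Factorial.fact n)%nat. apply mult_INR. Qed.

Lemma deriv_cR a b n : PS_derive (cR a b) n = a * cR a b n - b * cI a b n.
Proof.
  unfold PS_derive, cR, cI. rewrite fact_S. simpl Cpow. cbn [Cre Cim Cmul].
  pose proof (INR_fact_lt_0 n). pose proof (lt_0_INR (S n) ltac:(lia)).
  field. lra.
Qed.

Lemma deriv_cI a b n : PS_derive (cI a b) n = a * cI a b n + b * cR a b n.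
Proof.
  unfold PS_derive, cR, cI. rewrite fact_S. simpl Cpow. cbn [Cre Cim Cmul].
  pose proof (INR_fact_lt_0 n). pose proof (lt_0_INR (S n) ltac:(lia)).
  field. lra.
Qed.

Lemma rad_cR a b x : Rbar_lt (Rabs x) (CV_radius (cR a b)).
Proof. apply (radius_inf _ 1 (Rabs a + Rabs b)); [lra | pose proof (Rabs_pos a); pose proof (Rabs_pos b); lra | apply cR_bound]. Qed.
Lemma rad_cI a b x : Rbar_lt (Rabs x) (CV_radius (cI a b)).
Proof. apply (radius_inf _ 1 (Rabs a + Rabs b)); [lra | pose proof (Rabs_pos a); pose proof (Rabs_pos b); lra | apply cI_bound]. Qed.

Lemma PSeries_lin (u v : nat -> R) (p q t : R) :
  (forall x, Rbar_lt (Rabs x) (CV_radius u)) -> (forall x, Rbar_lt (Rabs x) (CV_radius v)) ->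
  PSeries (fun n => p * u n + q * v n) t = p * PSeries u t + q * PSeries v t.
Proof.
  intros Hu Hv.
  rewrite (PSeries_ext _ (PS_plus (PS_scal p u) (PS_scal q v))).
  2:{ intros n. reflexivity. }
  rewrite PSeries_plus, !PSeries_scal. reflexivity.
  - apply CV_radius_inside. destruct (Req_dec p 0) as [->|Hp].
    + rewrite (CV_radius_ext _ (fun _ => 0)). rewrite CV_radius_const_0. simpl; auto.
      intros n; unfold PS_scal; simpl. change (scal 0 (u n)) with (0 * u n). ring.
    + rewrite CV_radius_scal; auto.
  - apply CV_radius_inside. destruct (Req_dec q 0) as [->|Hq].
    + rewrite (CV_radius_ext _ (fun _ => 0)). rewrite CV_radius_const_0. simpl; auto.
      intros n; unfold PS_scal; simpl. change (scal 0 (v n)) with (0 * v n). ring.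
    + rewrite CV_radius_scal; auto.
Qed.

Lemma cexp_series a b :
  Un_cv (fun N => sum_f_R0 (cR a b) N) (exp a * cos b) /\
  Un_cv (fun N => sum_f_R0 (cI a b) N) (exp a * sin b).
Proof.
  destruct (ode_unique (PSeries (cR a b)) (PSeries (cI a b)) a b) as [E1 E2].
  - intros t.
    replace (a * PSeries (cR a b) t - b * PSeries (cI a b) t) with
      (PSeries (fun n => a * cR a b n + (-b) * cI a b n) t).
    + rewrite (PSeries_ext _ (PS_derive (cR a b))). apply is_derive_PSeries, rad_cR.
      intros n; rewrite deriv_cR; ring.
    + rewrite PSeries_lin; [ring | apply rad_cR | apply rad_cI].
  - intros t.
    replace (a * PSeries (cI a b) t + b * PSeries (cR a b) t) with
      (PSeries (fun n => a * cI a b n + b * cR a b n) t).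
    + rewrite (PSeries_ext _ (PS_derive (cI a b))). apply is_derive_PSeries, rad_cI.
      intros n; rewrite deriv_cI; ring.
    + rewrite PSeries_lin; [ring | apply rad_cI | apply rad_cR].
  - rewrite PSeries_0. unfold cR. simpl. field.
  - rewrite PSeries_0. unfold cI. simpl. field.
  - rewrite <- E1, <- E2. split.
    + apply is_lim_seq_Reals.
      pose proof (PSeries_correct (cR a b) 1 (CV_radius_inside _ _ (rad_cR a b 1))) as H.
      eapply is_lim_seq_ext; [| exact H].
      intros n. rewrite sum_n_Reals. apply sum_eq. intros i _.
      change (scal (pow_n 1 i) (cR a b i)) with (pow_n 1 i * cR a b i). rewrite pow_n_pow, pow1. ring.
    + apply is_lim_seq_Reals.
      pose proof (PSeries_correct (cI a b) 1 (CV_radius_inside _ _ (rad_cI a b 1))) as H.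
      eapply is_lim_seq_ext; [| exact H].
      intros n. rewrite sum_n_Reals. apply sum_eq. intros i _.
      change (scal (pow_n 1 i) (cI a b i)) with (pow_n 1 i * cI a b i). rewrite pow_n_pow, pow1. ring.
Qed.

Fixpoint ES (w : Cplx) (N : nat) : Cplx :=
  match N with
  | O => C1
  | S n => Cadd (ES w n) (Cmul (RtoC (/ INR (Factorial.fact (S n)))) (Cpow w (S n)))
  end.

Lemma Mpow_diag d1 d2 n : Mpow (mkM2 d1 C0 C0 d2) n = mkM2 (Cpow d1 n) C0 C0 (Cpow d2 n).
Proof.
  induction n; [reflexivity|]. cbn [Mpow]. rewrite IHn.
  apply M2_eq; cbn [m11 m12 m21 m22 Mmul Cpow]; ring.
Qed.

Lemma expsum_diag d1 d2 N : expsum (mkM2 d1 C0 C0 d2) N = mkM2 (ES d1 N) C0 C0 (ES d2 N).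
Proof.
  induction N; [reflexivity|]. cbn [expsum ES]. rewrite IHN, Mpow_diag.
  apply M2_eq; cbn [m11 m12 m21 m22 Madd Mscale]; ring.
Qed.

Lemma ES_re a b N : Cre (ES (mkC a b) N) = sum_f_R0 (cR a b) N.
Proof.
  induction N.
  - simpl. unfold cR. simpl. field.
  - cbn [ES sum_f_R0]. rewrite <- IHN. unfold cR. cbn [Cre Cadd Cmul RtoC Cim]. unfold Rdiv. ring.
Qed.
Lemma ES_im a b N : Cim (ES (mkC a b) N) = sum_f_R0 (cI a b) N.
Proof.
  induction N.
  - simpl. unfold cI. simpl. field.
  - cbn [ES sum_f_R0]. rewrite <- IHN. unfold cI. cbn [Cre Cadd Cmul RtoC Cim]. unfold Rdiv. ring.
Qed.

Lemma ES_cv w : Ccv (ES w) (Cexp w).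
Proof.
  destruct w as [a b]. destruct (cexp_series a b) as [H1 H2]. split.
  - eapply Un_cv_ext; [| exact H1]. intros n; simpl; rewrite ES_re; reflexivity.
  - eapply Un_cv_ext; [| exact H2]. intros n; simpl; rewrite ES_im; reflexivity.
Qed.

Lemma cv_const (c : R) : Un_cv (fun _ => c) c.
Proof. intros eps Heps. exists 0%nat. intros. unfold R_dist. rewrite Rminus_diag, Rabs_R0. lra. Qed.

Lemma C0_cv : Ccv (fun _ => C0) C0.
Proof. split; apply cv_const. Qed.

Lemma Ccv_unique u l1 l2 : Ccv u l1 -> Ccv u l2 -> l1 = l2.
Proof.
  intros [H1 H2] [H3 H4]. apply Cplx_eq; eapply UL_sequence; eauto.
Qed.

Lemma Mcv_unique u l1 l2 : Mcv u l1 -> Mcv u l2 -> l1 = l2.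
Proof.
  intros [H1 [H2 [H3 H4]]] [K1 [K2 [K3 K4]]].
  apply M2_eq; eapply Ccv_unique; eauto.
Qed.

Lemma Ccv_ext u v l : (forall n, u n = v n) -> Ccv v l -> Ccv u l.
Proof.
  intros H [H1 H2]; split; eapply Un_cv_ext; try eassumption; intros n; simpl; rewrite H; reflexivity.
Qed.

Lemma mexp_diag d1 d2 : mexp (mkM2 d1 C0 C0 d2) = mkM2 (Cexp d1) C0 C0 (Cexp d2).
Proof.
  assert (H : Mcv (fun N => expsum (mkM2 d1 C0 C0 d2) N) (mkM2 (Cexp d1) C0 C0 (Cexp d2))).
  { unfold Mcv. cbn [m11 m12 m21 m22]. split; [|split; [|split]].
    - apply (Ccv_ext _ (ES d1)); [intros n; rewrite expsum_diag; reflexivity | apply ES_cv].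
    - apply (Ccv_ext _ (fun _ => C0)); [intros n; rewrite expsum_diag; reflexivity | apply C0_cv].
    - apply (Ccv_ext _ (fun _ => C0)); [intros n; rewrite expsum_diag; reflexivity | apply C0_cv].
    - apply (Ccv_ext _ (ES d2)); [intros n; rewrite expsum_diag; reflexivity | apply ES_cv]. }
  unfold mexp. eapply Mcv_unique; [| exact H].
  apply epsilon_spec. exists (mkM2 (Cexp d1) C0 C0 (Cexp d2)). exact H.
Qed.

Lemma Cexp_add u v : Cexp (Cadd u v) = Cmul (Cexp u) (Cexp v).
Proof.
  destruct u as [a b], v as [c d]. apply Cplx_eq; cbn; rewrite exp_plus, ?cos_plus, ?sin_plus; ring.
Qed.

Lemma Cexp_0 : Cexp C0 = C1.
Proof. apply Cplx_eq; cbn; rewrite ?exp_0, ?cos_0, ?sin_0; ring. Qed.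

Lemma EA c tau zeta : E c tau (matA zeta) =
  mkM2 (Cexp (Cmul (RtoC (c * tau)) (Copp (Cmul Ci zeta)))) C0 C0 (Cexp (Cmul (RtoC (c * tau)) (Cmul Ci zeta))).
Proof.
  unfold E. rewrite <- mexp_diag. f_equal. unfold matA. apply M2_eq; cbn [m11 m12 m21 m22 Mscale]; ring.
Qed.

Theorem mainTheorem2 (tau sigma : R) (q : Cplx)
  (htau : 0 < tau) (hsigma : sigma = 1 \/ sigma = -1) :
  exists s : nat -> M2,
    forall zeta : Cplx,
      let Z := Cexp (Cmul (Copp Ci) (Cmul (RtoC (tau / 3)) zeta)) in
      let W := Cpow Z 2 in
      prodP tau sigma q zeta = Mscale (Cinv (Cpow Z 7)) (Mpoly s 7 W).
Proof.
  set (B1 := E (7/48) tau (matB sigma q)).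
  set (B2 := E (3/8) tau (matB sigma q)).
  set (B3 := E (-(1/48)) tau (matB sigma q)).
  destruct (PolyF_Q B1 B2 B3) as [s Hs].
  exists s. intros zeta Z W. unfold W. rewrite <- Hs.
  set (u := Cmul (Copp Ci) (Cmul (RtoC (tau / 3)) zeta)) in Z.
  assert (HZ : Cmul Z (Cexp (Copp u)) = C1).
  { unfold Z. rewrite <- Cexp_add. replace (Cadd u (Copp u)) with C0 by ring. apply Cexp_0. }
  rewrite <- (assemble B1 B2 B3 Z (Cexp (Copp u)) HZ).
  unfold prodP. cbv zeta. fold B1 B2 B3.
  rewrite !EA.
  assert (Hu : forall c, c * tau = c * 3 * (tau / 3)) by (intros; field).
  replace (Cmul (RtoC (1 / 3 * tau)) (Copp (Cmul Ci zeta))) with u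
    by (unfold u; destruct zeta; apply Cplx_eq; cbn; field).
  replace (Cmul (RtoC (1 / 3 * tau)) (Cmul Ci zeta)) with (Copp u)
    by (unfold u; destruct zeta; apply Cplx_eq; cbn; field).
  replace (Cmul (RtoC (- (1 / 3) * tau)) (Copp (Cmul Ci zeta))) with (Copp u)
    by (unfold u; destruct zeta; apply Cplx_eq; cbn; field).
  replace (Cmul (RtoC (- (1 / 3) * tau)) (Cmul Ci zeta)) with u
    by (unfold u; destruct zeta; apply Cplx_eq; cbn; field).
  replace (Cmul (RtoC (1 * tau)) (Copp (Cmul Ci zeta))) with (Cadd u (Cadd u u))
    by (unfold u; destruct zeta; apply Cplx_eq; cbn; field).
  replace (Cmul (RtoC (1 * tau)) (Cmul Ci zeta)) with (Cadd (Copp u) (Cadd (Copp u) (Copp u)))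
    by (unfold u; destruct zeta; apply Cplx_eq; cbn; field).
  rewrite !Cexp_add. reflexivity.
Qed.
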